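(* Assume the inverse theorem $\mathrm{GI}(s)$: for every $s\ge1$, $\delta>0$ there are $C,c>0$ such that any $f:[N]\to\mathbb{C}$ with $|f|\le1$ and $\|f\|_{U^{s+1}[N]}\ge\delta$ has $|\mathbb{E}_{n\in[N]}f(n)\overline{\psi(n)}|\ge c$ for some degree $\le s$ polynomial nilsequence $\psi$ of complexity $\le C$. Then for every $s\ge1$ and $\delta>0$ there exist a growth function $\Phi_{s,\delta}$ and $c'=c'(s,\delta)>0$ such that for every $N$ and every $f:[N]\to[-1,1]$ with $\|f\|_{U^{s+1}[N]}\ge\delta$ there is a set $E\subseteq[N]$ which is $s$-measurable with growth function $\Phi_{s,\delta}$ and satisfies $|\mathbb{E}_{n\in[N]}f(n)1_E(n)|\ge c'$.
   Context: A growth function is a monotone increasing $\Phi:\mathbb{R}^+\to\mathbb{R}^+$ with $\Phi(M)\ge M$. A degree $\le s$ polynomial nilsequence of complexity $\le M$ is $\psi(n)=F(g(n)\Gamma)$ where $(G/\Gamma,G_\bullet)$ is a filtered nilmanifold of degree $\le s$ and complexity $\le M$ (connected simply connected nilpotent Lie group $G$, discrete cocompact $\Gamma$, rational filtration $G=G_{(0)}=G_{(1)}\ge G_{(2)}\ge\cdots$ with $[G_{(i)},G_{(j)}]\subseteq G_{(i+j)}$, $G_{(i)}=\{\mathrm{id}\}$ for $i>s$, adapted Mal'cev basis defining a metric; complexity bounds dimension, degree and rationality of the basis), $g:\mathbb{Z}\to G$ is a polynomial sequence adapted to $G_\bullet$ (i.e. $\partial_{h_1}\cdots\partial_{h_i}g(n)\in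 G_{(i)}$, $\partial_hg(n)=g(n+h)g(n)^{-1}$), and $F:G/\Gamma\to\mathbb{C}$ has Lipschitz norm $\le M$. A set $E\subseteq[N]$ is $s$-measurable with growth function $\Phi$ if for every $M\ge1$ there is a degree $\le s$ polynomial nilsequence $\psi:\mathbb{Z}\to[0,1]$ of complexity $\le\Phi(M)$ with $\|\psi-1_E\|_{L^2[N]}\le1/M$, where $\|f\|_{L^2[N]}=(\mathbb{E}_{n\in[N]}|f(n)|^2)^{1/2}$. Gowers norms $\|\cdot\|_{U^{k}[N]}$ are defined by extending by zero into $\mathbb{Z}/\tilde N\mathbb{Z}$, $\tilde N\ge 2^kN$, and normalising by $\|1_{[N]}\|_{U^k}$, with $\|f\|_{U^k(G)}^{2^k}=\mathbb{E}_{x,h_1..h_k}\Delta_{h_1}\cdots\Delta_{h_k}f(x)$, $\Delta_hf(x)=f(x+h)\overline{f(x)}$. *)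

(* Defs.v *)
From HB Require Import structures.
From mathcomp Require Import all_boot all_order all_algebra.
From mathcomp Require Import reals Rstruct complex.
Set Implicit Arguments. Unset Strict Implicit. Unset Printing Implicit Defensive.
Import Order.TTheory GRing.Theory Num.Theory.
Local Open Scope ring_scope.
Local Open Scope complex_scope.

Notation RR := Rdefinitions.R.
Notation CC := (complex Rdefinitions.R).

Definition avgN (N : nat) (g : nat -> CC) : CC :=
  (N%:R)^-1 * \sum_(1 <= n < N.+1) g n.

Definition inN (N n : nat) : bool := (1 <= n <= N)%N.

(* average over Z/Nt Z, elements represented by 0..Nt-1 *)
Definition avgZ (Nt : nat) (g : nat -> CC) : CC :=
  (Nt%:R)^-1 * \sum_(x < Nt) g x.

Definition extZ (N Nt : nat) (f : nat -> CC) (x : nat) : CC :=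
  let y := (x %% Nt)%N in if inN N y then f y else 0.

Definition cDelta (Nt h : nat) (F : nat -> CC) (x : nat) : CC :=
  F ((x + h) %% Nt)%N * conjc (F x).

Fixpoint gowers_avg (Nt k : nat) (F : nat -> CC) : CC :=
  match k with
  | 0 => avgZ Nt F
  | k'.+1 => avgZ Nt (fun h => gowers_avg Nt k' (cDelta Nt h F))
  end.

(* ||F||_{U^k(Z/Nt Z)} = (gowers_avg)^(1/2^k), the 2^k-th root being taken as
   k iterated square roots of the (real, nonnegative) average *)
Definition gowersZ (Nt k : nat) (F : nat -> CC) : RR :=
  iter k Num.sqrt (complex.Re (gowers_avg Nt k F)).

Definition gowersN (k N : nat) (f : nat -> CC) : RR :=
  let Nt := (2 ^ k * N)%N in
  gowersZ Nt k (extZ N Nt f) / gowersZ Nt k (extZ N Nt (fun _ => 1)).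

(*   g = R^m with structure constants c: [X_i,X_j] = sum_k c i j k X_k,     *)
(*   X_i the standard basis (the Mal'cev basis). The simply connected group *)
(*   G is g with the Baker-Campbell-Hausdorff product (exp = identity).     *)

Definition vec (m : nat) := 'rV[RR]_m.
Definition sconst (m : nat) := 'I_m -> 'I_m -> 'I_m -> RR.

Definition lie_br m (c : sconst m) (x y : vec m) : vec m :=
  \row_k \sum_i \sum_j x 0 i * y 0 j * c i j k.

Fixpoint nestbr m (c : sconst m) (xs : seq (vec m)) : vec m :=
  match xs with
  | [::] => 0
  | x :: xs' => if xs' is [::] then x else lie_br c x (nestbr c xs')
  end.

Definition is_lie_algebra m (c : sconst m) : Prop :=
  (forall i j k, c i j k = - c j i k) /\
  (forall x y z : vec m,
     lie_br c x (lie_br c y z) + lie_br c y (lie_br c z x)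
     + lie_br c z (lie_br c x y) = 0).

Definition lie_nilpotent m (c : sconst m) (s : nat) : Prop :=
  forall xs : seq (vec m), size xs = s.+1 -> nestbr c xs = 0.

(* Dynkin's form of the BCH formula, truncated at total degree s (exact when
   the Lie algebra is nilpotent of step <= s):
   log(e^X e^Y) = sum_n (-1)^(n-1)/n sum_{r_i+t_i>0}
        [X^{r_1} Y^{t_1} ... X^{r_n} Y^{t_n}] / ((sum_i (r_i+t_i)) prod_i r_i! t_i!) *)
Definition dyn_word m n (rt : {ffun 'I_n -> 'I_(m.+1) * 'I_(m.+1)}) {V : Type}
    (x y : V) : seq V :=
  flatten [seq nseq (rt i).1 x ++ nseq (rt i).2 y | i <- enum 'I_n].

Definition dyn_len s n (rt : {ffun 'I_n -> 'I_(s.+1) * 'I_(s.+1)}) : nat :=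
  (\sum_(i < n) ((rt i).1 + (rt i).2))%N.

Definition dyn_ok s n (rt : {ffun 'I_n -> 'I_(s.+1) * 'I_(s.+1)}) : bool :=
  [forall i, (0 < (rt i).1 + (rt i).2)%N] && (dyn_len rt <= s)%N.

Definition dyn_coef s n (rt : {ffun 'I_n -> 'I_(s.+1) * 'I_(s.+1)}) : RR :=
  (-1) ^+ n.-1 / n%:R /
  ((dyn_len rt)%:R * \prod_(i < n) (((rt i).1)`!%:R * ((rt i).2)`!%:R)).

Definition bch m (c : sconst m) (s : nat) (x y : vec m) : vec m :=
  \sum_(n < s.+1 | (0 < n)%N)
    \sum_(rt : {ffun 'I_n -> 'I_(s.+1) * 'I_(s.+1)} | dyn_ok rt)
       dyn_coef rt *: nestbr c (dyn_word rt x y).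

Definition gmul m (c : sconst m) s (x y : vec m) : vec m := bch c s x y.
Definition ginv m (x : vec m) : vec m := - x.

(* Mal'cev coordinates of the second kind:
   malcev t = exp(t_1 X_1) exp(t_2 X_2) ... exp(t_m X_m) *)
Definition malcev m (c : sconst m) s (t : 'rV[RR]_m) : vec m :=
  foldr (gmul c s) 0 [seq t 0 i *: (delta_mx 0 i : vec m) | i <- enum 'I_m].

Definition int_vec m (t : 'rV[RR]_m) : Prop := forall i, exists z : int, t 0 i = z%:~R.

Definition in_Gamma m (c : sconst m) s (g : vec m) : Prop :=
  exists t, int_vec t /\ malcev c s t = g.

(* G_(i) = exp span(X_{m-d_i+1},...,X_m), d_i = dim G_(i) *)
Definition in_filt m (d : nat -> nat) (i : nat) (x : vec m) : Prop :=
  forall k : 'I_m, (k < m - d i)%N -> x 0 k = 0.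

(* span(X_{j+1},...,X_m) (0-based: coordinates >= j) is an ideal *)
Definition span_tail_ideal m (c : sconst m) (j : nat) : Prop :=
  forall (i k l : 'I_m), (j <= k)%N -> (l < j)%N -> c i k l = 0.

(* (G/Gamma, G_.) is a filtered nilmanifold of degree <= s, with G given by
   the nilpotent Lie algebra (R^m, c), filtration of dimensions d, and the
   standard basis an adapted Mal'cev basis. *)
Definition filtered_nilmanifold m (c : sconst m) (s : nat) (d : nat -> nat) : Prop :=
  [/\ is_lie_algebra c /\ lie_nilpotent c s,
      (* Mal'cev basis: nested ideals, unique coordinates, Gamma = Z-points *)
      (forall j, span_tail_ideal c j),
      (forall g : vec m, exists! t : 'rV[RR]_m, malcev c s t = g),
      (forall g h, in_Gamma c s g -> in_Gamma c s h -> in_Gamma c s (gmul c s g h)) /\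
      (forall g, in_Gamma c s g -> in_Gamma c s (ginv g))
    & (* filtration G = G_(0) = G_(1) >= G_(2) >= ..., G_(i) = id for i > s,
         [G_(i), G_(j)] <= G_(i+j) *)
      [/\ d 0 = m, d 1 = m, (forall i, (d i.+1 <= d i)%N),
          (forall i, (s < i)%N -> d i = 0)
        & (forall i j (x y : vec m), in_filt d i x -> in_filt d j y ->
             in_filt d (i + j)
               (gmul c s (gmul c s x y) (gmul c s (ginv x) (ginv y))))]].

Definition rat_height_le (M : RR) (x : RR) : Prop :=
  exists p q : int, q != 0 /\ (`|p|%:~R <= M) /\ (`|q|%:~R <= M) /\ x = p%:~R / q%:~R.

Definition complexity_le m (c : sconst m) (s : nat) (M : RR) : Prop :=
  [/\ m%:R <= M, s%:R <= M & forall i j k, rat_height_le M (c i j k)].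

Definition pder m (c : sconst m) s (h : int) (g : int -> vec m) (n : int) : vec m :=
  gmul c s (g (n + h)) (ginv (g n)).

Fixpoint pders m (c : sconst m) s (hs : seq int) (g : int -> vec m) : int -> vec m :=
  match hs with
  | [::] => g
  | h :: hs' => pders c s hs' (pder c s h g)
  end.

Definition poly_seq m (c : sconst m) s (d : nat -> nat) (g : int -> vec m) : Prop :=
  forall (hs : seq int) (n : int), in_filt d (size hs) (pders c s hs g n).

Definition supn m (t : 'rV[RR]_m) : RR := \big[Num.max/0]_(i < m) `|t 0 i|.

(* F : G/Gamma -> C, viewed as a right-Gamma-invariant F : G -> C *)
Definition Gamma_invariant m (c : sconst m) s (F : vec m -> CC) : Prop :=
  forall x gam, in_Gamma c s gam -> F (gmul c s x gam) = F x.

(* Lipschitz norm ||F||_oo + Lip(F) <= M, for the metric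
   d(x,y) = inf_{x_0 = x, ..., x_n = y} sum_i min(|psi(x_i x_{i+1}^-1)|,
                                              |psi(x_{i+1} x_i^-1)|)
   on G, psi the Mal'cev coordinates, and the induced quotient metric on
   G/Gamma (for Gamma-invariant F, Lipschitz for the quotient metric iff
   Lipschitz for d on G with the same constant). *)
Definition lip_norm_le m (c : sconst m) s (F : vec m -> CC) (M : RR) : Prop :=
  exists K1 K2 : RR, [/\ 0 <= K1, 0 <= K2, K1 + K2 <= M,
    (forall x, `|F x| <= K1%:C)
  & (forall (n : nat) (x : nat -> vec m) (t u : nat -> 'rV[RR]_m),
       (forall i, (i < n)%N ->
          malcev c s (t i) = gmul c s (x i) (ginv (x i.+1)) /\
          malcev c s (u i) = gmul c s (x i.+1) (ginv (x i))) ->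
       `|F (x 0%N) - F (x n)| <=
         (K2 * \sum_(i < n) Num.min (supn (t i)) (supn (u i)))%:C)].

Definition nilseq (s : nat) (M : RR) (psi : int -> CC) : Prop :=
  exists (s' m : nat) (c : sconst m) (d : nat -> nat) (g : int -> vec m)
         (F : vec m -> CC),
    [/\ (s' <= s)%N /\ filtered_nilmanifold c s' d, complexity_le c s' M,
        poly_seq c s' d g, Gamma_invariant c s' F /\ lip_norm_le c s' F M
      & forall n, psi n = F (g n)].

Definition growth_function (Phi : RR -> RR) : Prop :=
  (forall x y, 0 < x -> x <= y -> Phi x <= Phi y) /\
  (forall x, 0 < x -> 0 < Phi x /\ x <= Phi x).

Definition indic (E : nat -> bool) (n : nat) : CC := if E n then 1 else 0.

Definition L2N (N : nat) (g : nat -> CC) : RR :=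
  Num.sqrt (complex.Re (avgN N (fun n => `|g n| ^+ 2))).

Definition measurable_set (s : nat) (Phi : RR -> RR) (N : nat) (E : nat -> bool) : Prop :=
  forall M : RR, 1 <= M ->
    exists psi : int -> CC,
      [/\ nilseq s (Phi M) psi,
          (forall n, complex.Im (psi n) = 0 /\ 0 <= complex.Re (psi n) <= 1)
        & L2N N (fun n => psi (n%:Z) - indic E n) <= M^-1].

Definition GI_all : Prop :=
  forall (s : nat) (delta : RR), (1 <= s)%N -> 0 < delta ->
    exists C c : RR, 0 < C /\ 0 < c /\
      forall (N : nat) (f : nat -> CC), (0 < N)%N ->
        (forall n, inN N n -> `|f n| <= 1) ->
        delta <= gowersN s.+1 N f ->
        exists psi, nilseq s C psi /\
          c%:C <= `|avgN N (fun n => f n * conjc (psi n%:Z))|.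

(* Main.v *)
Require Import Defs.
From HB Require Import structures.
From mathcomp Require Import all_boot all_order all_algebra.
From mathcomp Require Import reals Rstruct complex.
From mathcomp Require Import lra ring zify.
Import Order.TTheory GRing.Theory Num.Theory.
Local Open Scope ring_scope.
Local Open Scope complex_scope.




Definition nc (z : CC) : RR := Num.sqrt (complex.Re z ^+ 2 + complex.Im z ^+ 2).

Lemma normcE (z : CC) : `|z| = (nc z)%:C.
Proof. by rewrite normc_def. Qed.

Lemma nc_real (r : RR) : nc r%:C = `|r|.
Proof. by rewrite /nc /= expr0n /= addr0 sqrtr_sqr. Qed.

Lemma normC_real (r : RR) : `|r%:C| = (`|r|)%:C.
Proof. by rewrite normcE nc_real. Qed.

Lemma nc_Re z : `|complex.Re z| <= nc z.
Proof.
rewrite /nc -sqrtr_sqr ler_sqrt; last by rewrite addr_ge0 // sqr_ge0.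
by rewrite lerDl sqr_ge0.
Qed.

Lemma nc_Im z : `|complex.Im z| <= nc z.
Proof.
rewrite /nc -sqrtr_sqr ler_sqrt; last by rewrite addr_ge0 // sqr_ge0.
by rewrite lerDr sqr_ge0.
Qed.

Lemma nc_le z : nc z <= `|complex.Re z| + `|complex.Im z|.
Proof.
rewrite /nc.
have h : 0 <= `|complex.Re z| + `|complex.Im z| by rewrite addr_ge0.
rewrite -(ger0_norm h) -sqrtr_sqr ler_sqrt; last by rewrite sqr_ge0.
rewrite -(real_normK (num_real (complex.Re z))) -(real_normK (num_real (complex.Im z))).
have h1 := normr_ge0 (complex.Re z); have h2 := normr_ge0 (complex.Im z).
rewrite sqrrD; nra.
Qed.

Lemma Re_sub (z w : CC) : complex.Re (z - w) = complex.Re z - complex.Re w.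
Proof. by case: z => a b; case: w => c d. Qed.
Lemma Im_sub (z w : CC) : complex.Im (z - w) = complex.Im z - complex.Im w.
Proof. by case: z => a b; case: w => c d. Qed.

Lemma realC_sub (a b : RR) : a%:C - b%:C = (a - b)%:C.
Proof. by rewrite rmorphB. Qed.

Lemma complexity_mono m (c : sconst m) s M M' :
  complexity_le c s M -> M <= M' -> complexity_le c s M'.
Proof.
case=> h1 h2 h3 hM; split; [lra|lra|].
move=> i j k; case: (h3 i j k) => p [q [hq [hp [hq' ->]]]].
exists p, q; split=> //; split; [lra|split; [lra|done]].
Qed.

Lemma nilseq_comp s C psi (P : CC -> RR) (phi : RR -> RR) (L M' : RR) :
  nilseq s C psi ->
  (forall z w, `|P z - P w| <= nc (z - w)) ->
  0 <= L ->
  (forall x y, `|phi x - phi y| <= L * `|x - y|) ->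
  (forall x, 0 <= phi x <= 1) ->
  C + 1 + L * C <= M' ->
  nilseq s M' (fun n => (phi (P (psi n)))%:C).
Proof.
move=> [s' [m [c [d [g [F [[hs hfm] hcx hps [hGI [K1 [K2 [hK1 hK2 hK hbd hlip]]]] hpsi]]]]]]].
move=> hP hL hphi h01 hM.
have hC : 0 <= C by lra.
have hLC : 0 <= L * C by rewrite mulr_ge0.
have hLK : L * K2 <= L * C by rewrite ler_wpM2l //; lra.
exists s', m, c, d, g, (fun x => (phi (P (F x)))%:C); split=> //.
- by apply: complexity_mono hcx _; lra.
- split.
  + by move=> x gam hg /=; rewrite hGI.
  + exists 1, (L * K2); split.
    * lra.
    * by rewrite mulr_ge0.
    * lra.
    * move=> x; rewrite normC_real lecR.
      have := h01 (P (F x)); rewrite ler_norml; lra.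
    * move=> n x t u hch.
      have := hlip n x t u hch; rewrite normcE lecR => hh.
      rewrite realC_sub normC_real lecR.
      apply: le_trans (hphi _ _) _.
      rewrite -mulrA ler_wpM2l //.
      by apply: le_trans (hP _ _) hh.
- by move=> n; rewrite hpsi.
Qed.



Definition ravg (N : nat) (g : nat -> RR) : RR :=
  (N%:R)^-1 * \sum_(1 <= n < N.+1) g n.

Lemma Re_sumN (N : nat) (g : nat -> CC) :
  complex.Re (\sum_(1 <= n < N.+1) g n) = \sum_(1 <= n < N.+1) complex.Re (g n).
Proof.
apply: (big_morph (@complex.Re RR)) => //.
by move=> [a b] [c d].
Qed.

Lemma Im_sumN (N : nat) (g : nat -> CC) :
  complex.Im (\sum_(1 <= n < N.+1) g n) = \sum_(1 <= n < N.+1) complex.Im (g n).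
Proof.
apply: (big_morph (@complex.Im RR)) => //.
by move=> [a b] [c d].
Qed.

Lemma invN_C (N : nat) : ((N%:R : CC)^-1) = ((N%:R : RR)^-1)%:C.
Proof. by rewrite fmorphV rmorph_nat. Qed.

Lemma Re_realM (r : RR) (z : CC) : complex.Re (r%:C * z) = r * complex.Re z.
Proof. by case: z => a b /=; rewrite mul0r subr0. Qed.
Lemma Im_realM (r : RR) (z : CC) : complex.Im (r%:C * z) = r * complex.Im z.
Proof. by case: z => a b /=; rewrite mul0r addr0. Qed.

Lemma Re_avgN N g : complex.Re (avgN N g) = ravg N (fun n => complex.Re (g n)).
Proof. by rewrite /avgN invN_C Re_realM Re_sumN. Qed.
Lemma Im_avgN N g : complex.Im (avgN N g) = ravg N (fun n => complex.Im (g n)).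
Proof. by rewrite /avgN invN_C Im_realM Im_sumN. Qed.

Lemma avgN_real N (g : nat -> RR) : avgN N (fun n => (g n)%:C) = (ravg N g)%:C.
Proof.
by rewrite /avgN invN_C /ravg rmorphM /= rmorph_sum.
Qed.

Lemma ravg_opp N g : ravg N (fun n => - g n) = - ravg N g.
Proof. by rewrite /ravg sumrN mulrN. Qed.

Lemma Re_fconj (x : RR) (z : CC) : complex.Re (x%:C * conjc z) = x * complex.Re z.
Proof. by case: z => a b /=; rewrite mul0r subr0. Qed.
Lemma Im_fconj (x : RR) (z : CC) : complex.Im (x%:C * conjc z) = - (x * complex.Im z).
Proof. by case: z => a b /=; rewrite mul0r addr0 mulrN. Qed.

Local Close Scope complex_scope.


Ltac splitifs := repeat match goal with
  | |- context [if ?a <= ?b then _ else _] => case: (lerP a b) => ?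
  | |- context [if ?a < ?b then _ else _] => case: (ltrP a b) => ?
  end.

Definition ib (b : bool) : RR := if b then 1 else 0.

Lemma ib_ge0 b : 0 <= ib b. Proof. by case: b => /=; lra. Qed.
Lemma ib_le1 b : ib b <= 1. Proof. by case: b => /=; lra. Qed.

Lemma tele (g : nat -> RR) (J : nat) :
  \sum_(j < J) (g j - g j.+1) = g 0%N - g J.
Proof.
transitivity (\sum_(j < J) ((- g j.+1) - (- g j))).
  by apply: eq_bigr => j _; rewrite opprK addrC.
rewrite -(big_mkord xpredT (fun j => - g j.+1 - - g j)) telescope_sumr //.
by rewrite opprK addrC.
Qed.

Definition posp (z : RR) : RR := if 0 <= z then z else 0.
Definition Uf (h z : RR) : RR := if 0 < z then h else 0.

Lemma layer_cake (h y : RR) (J : nat) :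
  0 < h -> 0 <= y -> y <= J%:R * h ->
  y <= \sum_(j < J) h * ib (j%:R * h < y) <= y + h.
Proof.
move=> hh hy hyJ.
have key : forall j : nat,
  posp (y - j%:R * h) - posp (y - j.+1%:R * h) <= h * ib (j%:R * h < y) <=
  posp (y - j%:R * h) - posp (y - j.+1%:R * h)
  + (Uf h (y - j%:R * h) - Uf h (y - j.+1%:R * h)).
  move=> j; rewrite /posp /Uf /ib -[j.+1%:R]natr1 mulrDl mul1r.
  set a := j%:R * h.
  splitifs; (apply/andP; split); lra.
apply/andP; split.
- apply: le_trans _ (ler_sum _ (fun (j : 'I_J) _ => proj1 (andP (key j)))).
  rewrite (tele (fun j => posp (y - j%:R * h))) /posp mul0r subr0.
  have -> : (0 <= y) = true by [].
  splitifs; lra.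
- apply: le_trans (ler_sum _ (fun (j : 'I_J) _ => proj2 (andP (key j)))) _.
  rewrite big_split /=.
  rewrite (tele (fun j => posp (y - j%:R * h))) (tele (fun j => Uf h (y - j%:R * h))).
  rewrite /posp /Uf mul0r subr0.
  splitifs; lra.
Qed.

Definition clampw (M z : RR) : RR := if z <= 0 then 0 else if z <= M then z else M.

Lemma grid_count (h w y : RR) (J : nat) :
  0 < h -> 0 <= w ->
  \sum_(j < J) ib (`|y - j%:R * h| < w) <= (2 * w + h) / h.
Proof.
move=> hh hw.
set T := clampw (2 * w + h).
have key : forall j : nat,
  ib (`|y - j%:R * h| < w) * h <=
  T (y + w + h - j%:R * h) - T (y + w + h - j.+1%:R * h).
  move=> j; rewrite /T /clampw /ib -[j.+1%:R]natr1 (mulrDl (j%:R)) mul1r.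
  set a := j%:R * h.
  case: (ltrP `|y - a| w) => h0.
  - move: h0; rewrite ltr_norml => /andP [h0 h0'].
    splitifs; lra.
  - splitifs; lra.
rewrite ler_pdivlMr // mulr_suml.
apply: le_trans (ler_sum _ (fun (j : 'I_J) _ => key j)) _.
rewrite (tele (fun j => T (y + w + h - j%:R * h))) /T /clampw.
splitifs; lra.
Qed.


Lemma inN_iota N n : inN N n = (1 <= n < N.+1)%N.
Proof. by rewrite /inN ltnS. Qed.

Lemma ravg_ext N g1 g2 : (forall n, inN N n -> g1 n = g2 n) -> ravg N g1 = ravg N g2.
Proof.
move=> h; rewrite /ravg; congr (_ * _); apply: eq_big_nat => n hn.
by apply: h; rewrite inN_iota.
Qed.

Lemma ravg_le N g1 g2 : (forall n, inN N n -> g1 n <= g2 n) -> ravg N g1 <= ravg N g2.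
Proof.
move=> h; rewrite /ravg ler_wpM2l ?invr_ge0 ?ler0n //.
by apply: ler_sum_nat => n hn; apply: h; rewrite inN_iota.
Qed.

Lemma ravg_const N x : (0 < N)%N -> ravg N (fun _ => x) = x.
Proof.
move=> hN; rewrite /ravg sumr_const_nat subn1 /= -[x *+ N]mulr_natl mulrA mulVf ?mul1r //.
by rewrite pnatr_eq0 -lt0n.
Qed.

Lemma ravg_abs N g : `|ravg N g| <= ravg N (fun n => `|g n|).
Proof.
rewrite /ravg normrM ger0_norm ?invr_ge0 ?ler0n // ler_wpM2l ?invr_ge0 ?ler0n //.
exact: ler_norm_sum.
Qed.

Lemma ravg_bound N g B : (0 < N)%N -> (forall n, inN N n -> `|g n| <= B) -> `|ravg N g| <= B.
Proof.
move=> hN h; apply: le_trans (ravg_abs _ _) _.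
by rewrite -(@ravg_const N B hN); apply: ravg_le.
Qed.

Lemma ravgD N g1 g2 : ravg N (fun n => g1 n + g2 n) = ravg N g1 + ravg N g2.
Proof. by rewrite /ravg big_split mulrDr. Qed.
Lemma ravgN N g : ravg N (fun n => - g n) = - ravg N g.
Proof. by rewrite /ravg sumrN mulrN. Qed.
Lemma ravgB N g1 g2 : ravg N (fun n => g1 n - g2 n) = ravg N g1 - ravg N g2.
Proof. by rewrite ravgD ravgN. Qed.
Lemma ravgZ N (x : RR) g : ravg N (fun n => x * g n) = x * ravg N g.
Proof. by rewrite /ravg -mulr_sumr mulrCA. Qed.
Lemma ravg_sum N J (F : 'I_J -> nat -> RR) :
  ravg N (fun n => \sum_(j < J) F j n) = \sum_(j < J) ravg N (F j).
Proof. by rewrite /ravg exchange_big /= mulr_sumr. Qed.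

Definition wsc (a : RR) (i : nat) : RR := a / ((i.+1%:R) ^+ 3 * i.+2%:R).

Lemma den_pos (i : nat) : 0 < (i.+1%:R : RR) ^+ 3 * i.+2%:R.
Proof. by rewrite mulr_gt0 // exprn_gt0 // ltr0n. Qed.

Lemma den_mono (i k : nat) : (i <= k)%N ->
  (i.+1%:R : RR) ^+ 3 * i.+2%:R <= (k.+1%:R : RR) ^+ 3 * k.+2%:R.
Proof.
move=> hik; rewrite -!natrX -!natrM ler_nat.
apply: leq_mul; last by rewrite ltnS.
by rewrite leq_exp2r // ltnS.
Qed.

Lemma wsc_pos a i : 0 < a -> 0 < wsc a i.
Proof. by move=> ha; rewrite /wsc divr_gt0 // den_pos. Qed.

Lemma wsc_anti a i k : 0 < a -> (i <= k)%N -> wsc a k <= wsc a i.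
Proof.
move=> ha hik; rewrite /wsc ler_pdivrMr ?den_pos // mulrAC ler_pdivlMr ?den_pos //.
by rewrite ler_wpM2l ?den_mono // ltW.
Qed.

Lemma wsc_le a i : 0 < a -> wsc a i <= a.
Proof.
move=> ha; rewrite /wsc ler_pdivrMr ?den_pos // ler_peMr ?(ltW ha) //.
have := @den_mono 0 i (leq0n i); rewrite /= expr1n mul1r.
move=> h; apply: le_trans h; rewrite ler1n //.
Qed.

Lemma wsc_sq a i : wsc a i * (i.+1%:R) ^+ 2 = a / (i.+1%:R * i.+2%:R).
Proof.
rewrite /wsc; have h1 : (i.+1%:R : RR) != 0 by rewrite pnatr_eq0.
have h2 : (i.+2%:R : RR) != 0 by rewrite pnatr_eq0.
field; apply/andP; split; apply: lt0r_neq0; have := ler0n RR i; lra.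
Qed.

Lemma sum_inv_bound (K : nat) :
  \sum_(i < K) 1 / ((i.+1%:R : RR) * i.+2%:R) <= 1.
Proof.
have -> : \sum_(i < K) 1 / ((i.+1%:R : RR) * i.+2%:R) =
          \sum_(i < K) ((fun j : nat => 1 / (j.+1%:R : RR)) i - (fun j : nat => 1 / (j.+1%:R : RR)) i.+1).
  apply: eq_bigr => i _ /=.
  have h1 : (i.+1%:R : RR) != 0 by rewrite pnatr_eq0.
  have h2 : (i.+2%:R : RR) != 0 by rewrite pnatr_eq0.
  rewrite -[i.+2%:R]natr1; rewrite -[i.+2%:R]natr1 in h2.
  field; apply/andP; split; apply: lt0r_neq0; have := ler0n RR i; lra.
rewrite (tele (fun j : nat => 1 / (j.+1%:R : RR))) /= div1r invr1 gerBl divr_ge0 // ler0n.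
Qed.


Definition cnt (N : nat) (v : nat -> RR) (t w : RR) : RR :=
  \sum_(1 <= n < N.+1) ib (`|v n - t| < w).

Lemma cnt_nat N v t w :
  cnt N v t w = ((\sum_(1 <= n < N.+1) nat_of_bool (`|v n - t| < w)%R)%N)%:R.
Proof. by rewrite /cnt natr_sum; apply: eq_bigr => n _; case: (_ < _). Qed.

Lemma cnt_ge0 N v t w : 0 <= cnt N v t w.
Proof. by rewrite /cnt; apply: sumr_ge0 => n _; apply: ib_ge0. Qed.

Lemma cnt_mono N v t w w' : w <= w' -> cnt N v t w <= cnt N v t w'.
Proof.
move=> hw; rewrite /cnt; apply: ler_sum => n _; rewrite /ib.
case: (ltrP `|v n - t| w) => h1; case: (ltrP `|v n - t| w') => h2 //; lra.
Qed.

Lemma cnt_zero N v t w : cnt N v t w < 1 -> cnt N v t w = 0.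
Proof.
rewrite cnt_nat -[1]/(1%:R) ltr_nat ltnS leqn0 => /eqP ->; done.
Qed.

Lemma ib_lt_sum (K : nat) (B : 'I_K -> bool) :
  [exists i, B i] -> 1 <= \sum_(i < K) ib (B i).
Proof.
move=> /existsP [i hi]; rewrite (bigD1 i) //= {1}/ib hi lerDl.
by apply: sumr_ge0 => k _; apply: ib_ge0.
Qed.


Lemma grid_main (N : nat) (f v : nat -> RR) (A c : RR) :
 (0 < N)%N -> 0 < A -> 0 < c ->
 (forall n, inN N n -> -1 <= f n <= 1) ->
 (forall n, inN N n -> `|v n| <= A) ->
 c / 2 <= `|ravg N (fun n => f n * v n)| ->
 c / (8*A) <= `|ravg N f| \/
 exists t : RR, c/(16*A) <= `|ravg N (fun n => f n * ib (t < v n))| /\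
   forall i : nat, cnt N v t (wsc (c/64) i) * (i.+1%:R)^+2 <= N%:R.
Proof.
move=> hN hA hc hf hv hcor.
have hNpos : 0 < (N%:R : RR) by rewrite ltr0n.
set a := c / 64.
have ea : a = c / 64 by [].
have ha : 0 < a by rewrite ea; lra.
set h := wsc a N.
have hh : 0 < h by apply: wsc_pos.
have hha : h <= a by apply: wsc_le.
have hfv : `|ravg N (fun n => f n * v n)| <= A.
  apply: ravg_bound => // n hn; rewrite normrM.
  have := hf n hn; have := hv n hn; rewrite -ler_norml => h1 h2.
  by rewrite -[A]mul1r ler_pM.
have hcA : c <= 2 * A by lra.
set J := (Num.truncn (2 * A / h)).+1.
have [hJ1 hJ2] : 2 * A <= J%:R * h /\ J%:R * h <= 2 * A + h.
  have h0 : 0 <= 2 * A / h by apply: divr_ge0; lra.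
  have /andP [h1 h2] := @Num.Theory.truncn_itv _ _ h0.
  rewrite /J; split.
  - by rewrite -ler_pdivrMr // ltW.
  - by rewrite -natr1 mulrDl mul1r lerD2r -ler_pdivlMr.
set t := fun j : nat => - A + j%:R * h.
set X := fun j : nat => ravg N (fun n => f n * ib (t j < v n)).
set e := fun n => \sum_(j < J) h * ib (j%:R * h < v n + A) - (v n + A).
have he : forall n, inN N n -> 0 <= e n <= h.
  move=> n hn; have := hv n hn; rewrite ler_norml => /andP [h1 h2].
  have := @layer_cake h (v n + A) J hh.
  move=> /(_ ltac:(lra) ltac:(lra)) /andP [h3 h4].
  rewrite /e; apply/andP; split; lra.
have hib : forall (j : nat) n, ib (j%:R * h < v n + A) = ib (t j < v n).
  move=> j n; congr ib; rewrite /t.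
  by apply/idP/idP => H; lra.
have hdec : ravg N (fun n => f n * v n) =
   h * \sum_(j < J) X j - A * ravg N f - ravg N (fun n => f n * e n).
  have -> : h * \sum_(j < J) X j = ravg N (fun n => \sum_(j < J) h * (f n * ib (t j < v n))).
    by rewrite ravg_sum mulr_sumr; apply: eq_bigr => j _; rewrite ravgZ.
  rewrite -ravgZ -!ravgB; apply: ravg_ext => n _.
  rewrite /e.
  have -> : \sum_(j < J) h * (f n * ib (t j < v n)) = f n * \sum_(j < J) h * ib (j%:R * h < v n + A).
    rewrite mulr_sumr; apply: eq_bigr => j _; rewrite hib; ring.
  ring.
have hfe : `|ravg N (fun n => f n * e n)| <= h.
  apply: ravg_bound => // n hn; rewrite normrM.
  have := hf n hn; rewrite -ler_norml => h1.
  have /andP [h2 h3] := he n hn.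
  rewrite (ger0_norm h2) -[h]mul1r ler_pM //.
have hXb : forall j, `|X j| <= 1.
  move=> j; apply: ravg_bound => // n hn; rewrite normrM.
  have := hf n hn; rewrite -ler_norml => h1.
  rewrite (ger0_norm (ib_ge0 _)) -[1]mul1r ler_pM // ?ib_ge0 ?ib_le1 //.
case: (lerP (c / (8 * A)) `|ravg N f|) => hcase; [by left | right].
have h8 : `|ravg N f| * (8 * A) < c by rewrite -ltr_pdivlMr // mulr_gt0 //; lra.
have hsumX : c / 4 <= h * \sum_(j < J) `|X j|.
  have h1 : `|h * \sum_(j < J) X j - A * ravg N f - ravg N (fun n => f n * e n)|
      <= h * \sum_(j < J) `|X j| + A * `|ravg N f| + h.
    apply: le_trans (ler_normB _ _) _.
    apply: lerD; last by [].
    apply: le_trans (ler_normB _ _) _.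
    rewrite (normrM h) (normrM A) (gtr0_norm hh) (gtr0_norm hA).
    apply: lerD => //.
    apply: ler_wpM2l; [exact: ltW | exact: ler_norm_sum].
  rewrite hdec in hcor.
  lra.
set th := c / (16 * A).
have hth0 : 0 < th by rewrite /th divr_gt0 //; lra.
have hthA : th * (16 * A) = c by rewrite /th; field; apply: lt0r_neq0; lra.
have hth8 : th <= 1 / 8 by rewrite /th ler_pdivrMr; lra.
have hG : \sum_(j < J) `|X j| <= \sum_(j < J) ib (th <= `|X j|) + J%:R * th.
  have -> : J%:R * th = \sum_(j < J) th by rewrite sumr_const card_ord mulr_natl.
  rewrite -big_split /=; apply: ler_sum => j _.
  have := hXb j; rewrite /ib.
  case: (lerP th `|X j|) => hj; lra.
have hGcount : c / (16 * h) <= \sum_(j < J) ib (th <= `|X j|).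
  set S := \sum_(j < J) ib (th <= `|X j|).
  rewrite ler_pdivrMr; last by rewrite mulr_gt0 //; lra.
  have X1 : c / 4 <= h * S + (J%:R * h) * th.
    apply: le_trans hsumX _.
    have -> : h * S + J%:R * h * th = h * (S + J%:R * th) by ring.
    apply: ler_wpM2l; [exact: ltW | exact: hG].
  have X2 : (J%:R * h) * th <= (2 * A + h) * th by apply: ler_wpM2r; [exact: ltW | exact: hJ2].
  have X4 : h * th <= h * (1 / 8) by apply: ler_wpM2l; [exact: ltW | exact: hth8].
  lra.
set B := fun (i : nat) (j : nat) => N%:R < cnt N v (t j) (wsc a i) * (i.+1%:R) ^+ 2.
have hcntsum : forall i, (i <= N)%N ->
    \sum_(j < J) cnt N v (t j) (wsc a i) <= N%:R * (3 * wsc a i / h).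
  move=> i hi.
  have hw : h <= wsc a i by apply: wsc_anti.
  have hw0 : 0 < wsc a i by apply: wsc_pos.
  rewrite /cnt exchange_big /=.
  apply: le_trans (_ : \sum_(1 <= n < N.+1) ((2 * wsc a i + h) / h) <= _).
    apply: ler_sum => n _.
    have -> : \sum_(j < J) ib (`|v n - t j| < wsc a i) =
              \sum_(j < J) ib (`|(v n + A) - j%:R * h| < wsc a i).
      by apply: eq_bigr => j _; rewrite /t; congr ib; congr (`|_| < _); ring.
    by apply: grid_count => //; apply: ltW.
  rewrite sumr_const_nat subn1 /= -[_ *+ N]mulr_natl ler_wpM2l ?ler0n //.
  rewrite ler_pM2r ?invr_gt0 //; lra.
have hBi : forall i, (i <= N)%N ->
    \sum_(j < J) ib (B i j) <= 3 * a / (h * (i.+1%:R * i.+2%:R)).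
  move=> i hi.
  set q := (i.+1%:R : RR) ^+ 2.
  have hq : 0 < q by rewrite /q exprn_gt0 // ltr0n.
  have h1 : (\sum_(j < J) ib (B i j)) * N%:R <= (\sum_(j < J) cnt N v (t j) (wsc a i)) * q.
    rewrite !mulr_suml; apply: ler_sum => j _; rewrite /B /ib.
    case: (ltrP N%:R (cnt N v (t j) (wsc a i) * q)) => hb.
    - by rewrite mul1r ltW.
    - by rewrite mul0r mulr_ge0 ?cnt_ge0 // ltW.
  have h2 := hcntsum i hi.
  have h3 : (\sum_(j < J) ib (B i j)) * N%:R <= (3 * (wsc a i * q) / h) * N%:R.
    apply: le_trans h1 _.
    have -> : 3 * (wsc a i * q) / h * N%:R = (N%:R * (3 * wsc a i / h)) * q by ring.
    apply: ler_wpM2r; [exact: ltW | exact: h2].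
  rewrite ler_pM2r // in h3.
  apply: le_trans h3 _; rewrite /q wsc_sq.
  have hD : 0 < (i.+1%:R : RR) * i.+2%:R by rewrite mulr_gt0 // ltr0n.
  rewrite le_eqVlt; apply/orP; left; apply/eqP; field.
  by rewrite !lt0r_neq0 //; have := ler0n RR i; lra.
have hBsum : \sum_(i < N.+1) \sum_(j < J) ib (B i j) <= 3 * a / h.
  apply: le_trans (_ : \sum_(i < N.+1) (3 * a / h) * (1 / ((i.+1%:R : RR) * i.+2%:R)) <= _).
    apply: ler_sum => i _.
    have hD : 0 < (i.+1%:R : RR) * i.+2%:R by rewrite mulr_gt0 // ltr0n.
    have -> : 3 * a / h * (1 / (i.+1%:R * i.+2%:R)) = 3 * a / (h * (i.+1%:R * i.+2%:R)).
      by field; rewrite !lt0r_neq0 //; have := ler0n RR i; lra.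
    by apply: hBi; rewrite -ltnS.
  rewrite -mulr_sumr -[X in _ <= X]mulr1 ler_wpM2l ?sum_inv_bound //.
  by rewrite divr_ge0 //; lra.
have [j hj] : exists j : 'I_J, (th <= `|X j|) && [forall i : 'I_N.+1, ~~ B i j].
  case: (boolP [exists j : 'I_J, (th <= `|X j|) && [forall i : 'I_N.+1, ~~ B i j]]).
    by move=> /existsP.
  move=> Hne; exfalso.
  have hle : \sum_(j < J) ib (th <= `|X j|) <= \sum_(j < J) \sum_(i < N.+1) ib (B i j).
    apply: ler_sum => j _.
    case Gj: (th <= `|X j|); last by rewrite /ib; apply: sumr_ge0 => i _; apply: ib_ge0.
    rewrite /ib; apply: ib_lt_sum.
    move/existsPn: Hne => Hne.
    have := Hne j; rewrite Gj /=; case/forallPn => i.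
    by rewrite negbK => hb; apply/existsP; exists i.
  rewrite exchange_big /= in hle.
  have e1 : 3 * a / h = 3 / 64 * (c / h) by rewrite /a; field; apply: lt0r_neq0.
  have e2 : c / (16 * h) = 1 / 16 * (c / h) by field; apply: lt0r_neq0.
  have hch : 0 < c / h by apply: divr_gt0.
  lra.
exists (t j); split.
  by move/andP: hj => [].
have hgoodN : forall i, (i <= N)%N -> cnt N v (t j) (wsc a i) * (i.+1%:R) ^+ 2 <= N%:R.
  move=> i hi; move/andP: hj => [_ /forallP /(_ (Ordinal (hi : (i < N.+1)%N)))].
  by rewrite /B /= leNgt.
move=> i; case: (leqP i N) => hiN; first by apply: hgoodN.
have h0 : cnt N v (t j) (wsc a N) = 0.
  apply: cnt_zero.
  have := hgoodN N (leqnn N).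
  have := cnt_ge0 N v (t j) (wsc a N).
  have hN0 : (0 : RR) <= N%:R by rewrite ler0n.
  rewrite -natr1.
  nra.
have h1 := @cnt_mono N v (t j) _ _ (@wsc_anti a N i ha (ltnW hiN)).
have := cnt_ge0 N v (t j) (wsc a i).
rewrite h0 in h1 => h2.
have -> : cnt N v (t j) (wsc a i) = 0 by lra.
by rewrite mul0r ler0n.
Qed.

Local Open Scope complex_scope.



Lemma nc_ge0 z : 0 <= nc z. Proof. exact: sqrtr_ge0. Qed.

Lemma nilseq_bound s C psi : nilseq s C psi -> forall n, nc (psi n) <= C.
Proof.
move=> [s' [m [c [d [g [F [_ _ _ [_ [K1 [K2 [hK1 hK2 hK hbd _]]]] hpsi]]]]]]] n.
have := hbd (g n); rewrite normcE lecR -hpsi; lra.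
Qed.

Definition cl (u : RR) : RR := if u <= 0 then 0 else if u <= 1 then u else 1.

Lemma cl01 u : 0 <= cl u <= 1.
Proof. rewrite /cl; splitifs; apply/andP; split; lra. Qed.

Lemma cl_lip u u' : `|cl u - cl u'| <= `|u - u'|.
Proof.
rewrite ler_norml /cl.
case: (lerP 0 (u - u')) => hs.
- rewrite (ger0_norm hs); splitifs; apply/andP; split; lra.
- rewrite (ltr0_norm hs); splitifs; apply/andP; split; lra.
Qed.

Lemma L2N_ext N g1 g2 : (forall n, inN N n -> g1 n = g2 n) -> L2N N g1 = L2N N g2.
Proof.
move=> h; rewrite /L2N /avgN; congr (Num.sqrt (complex.Re (_ * _))).
by apply: eq_big_nat => n hn; rewrite h // inN_iota.
Qed.

Lemma L2N_real N (r : nat -> RR) :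
  L2N N (fun n => (r n)%:C) = Num.sqrt (ravg N (fun n => r n ^+ 2)).
Proof.
rewrite /L2N.
have -> : avgN N (fun n => `|(r n)%:C| ^+ 2) = avgN N (fun n => (r n ^+ 2)%:C).
  rewrite /avgN; congr (_ * _); apply: eq_bigr => n _.
  by rewrite normC_real -rmorphXn /= real_normK // num_real.
by rewrite avgN_real.
Qed.

Lemma indicE (E : nat -> bool) n : indic E n = (ib (E n))%:C.
Proof. by rewrite /indic /ib; case: (E n). Qed.

Lemma cube_mono (x y : RR) : 0 <= x -> x <= y -> x ^+ 3 * (x + 1) <= y ^+ 3 * (y + 1).
Proof.
move=> h0 h1.
have h2 : x * x <= y * y by apply: ler_pM.
have h3 : x * x * x <= y * y * y by apply: ler_pM => //; apply: mulr_ge0.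
rewrite !exprS expr0 !mulr1 !mulrA.
apply: ler_pM; rewrite ?mulr_ge0 //; lra.
Qed.



Lemma err_bound (v t w : RR) : 0 < w ->
  (cl ((v - t) * w^-1) - ib (t < v)) ^+ 2 <= ib (`|v - t| < w).
Proof.
move=> hw.
have hwi : 0 < w^-1 by rewrite invr_gt0.
set u := (v - t) * w^-1.
have hu : v - t = u * w by rewrite /u mulfVK //; apply: lt0r_neq0.
have := cl01 u; have := ib_ge0 (t < v); have := ib_le1 (t < v).
case: (ltrP `|v - t| w) => hvt.
- have -> : ib true = 1 by []. move=> h1 h2 /andP [h3 h4]; rewrite expr2; nra.
- rewrite /ib => _ _ _.
  case: (lerP 0 (v - t)) => hs.
  + rewrite (ger0_norm hs) in hvt.
    have -> : (t < v) = true by apply/idP; lra.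
    have hu1 : 1 <= u by rewrite /u ler_pdivlMr //; lra.
    rewrite /cl; splitifs; rewrite expr2; nra.
  + have -> : (t < v) = false by apply/negbTE; rewrite -leNgt; lra.
    have hu0 : u < 0 by rewrite /u pmulr_llt0 //.
    rewrite /cl; splitifs; rewrite expr2; nra.
Qed.

Lemma meas_good (s : nat) (C a : RR) (psi : int -> CC) (P : CC -> RR) (N : nat)
    (t : RR) (Phi : RR -> RR) :
  nilseq s C psi ->
  (forall z w, `|P z - P w| <= nc (z - w)) ->
  0 < a -> (0 < N)%N ->
  (forall i : nat, cnt N (fun n => P (psi n%:Z)) t (wsc a i) * (i.+1%:R) ^+ 2 <= N%:R) ->
  (forall M, 1 <= M -> C + 1 + ((M + 1) ^+ 3 * (M + 2) / a) * C <= Phi M) ->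
  measurable_set s Phi N (fun n => inN N n && (t < P (psi n%:Z))).
Proof.
move=> hpsi hP ha hN hgood hPhi M hM.
have hC : 0 <= C by apply: le_trans (nc_ge0 (psi 0)) (@nilseq_bound s C psi hpsi 0).
have hM0 : 0 <= M by lra.
set i := Num.truncn M.
have /andP [hi1 hi2] := @Num.Theory.truncn_itv _ _ hM0.
rewrite -/i in hi1 hi2.
set w := wsc a i.
have hw : 0 < w by apply: wsc_pos.
have hwi : 0 <= w^-1 by rewrite invr_ge0 ltW.
set phi := fun x => cl ((x - t) * w^-1).
exists (fun n => (phi (P (psi n)))%:C); split.
- apply: (@nilseq_comp s C psi P phi (w^-1) (Phi M)) => //.
  + move=> x y; rewrite /phi; apply: le_trans (cl_lip _ _) _.
    have -> : (x - t) * w^-1 - (y - t) * w^-1 = (x - y) * w^-1 by ring.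
    by rewrite normrM (ger0_norm hwi) mulrC.
  + by move=> x; apply: cl01.
  + apply: le_trans (hPhi M hM); rewrite lerD2l.
    apply: ler_wpM2r => //.
    rewrite /w /wsc invf_div ler_pM2r ?invr_gt0 //.
    have h1 : (i.+1%:R : RR) <= M + 1 by rewrite -natr1; lra.
    have h2 := @cube_mono (i.+1%:R) (M + 1) (ler0n _ _) h1.
    have -> : (M + 2) = (M + 1) + 1 by ring.
    by rewrite -[i.+2%:R]natr1.
- by move=> n /=; split => //; apply: cl01.
- rewrite (@L2N_ext N _ (fun n => (phi (P (psi n%:Z)) - ib (inN N n && (t < P (psi n%:Z))))%:C)); last first.
    by move=> n _; rewrite indicE rmorphB.
  rewrite L2N_real.
  have hM1 : 0 < M by lra.
  rewrite -[M^-1]ger0_norm ?invr_ge0 // -sqrtr_sqr ler_sqrt; last by apply: sqr_ge0.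
  apply: le_trans (_ : ravg N (fun n => ib (`|P (psi n%:Z) - t| < w)) <= _).
    apply: ravg_le => n hn; rewrite hn /=.
    exact: err_bound.
  have := hgood i; rewrite -/w /ravg.
  rewrite -/(cnt N (fun n => P (psi n%:Z)) t w).
  set k := cnt N _ t w => hk.
  have hNpos : 0 < (N%:R : RR) by rewrite ltr0n.
  have hk0 : 0 <= k by apply: cnt_ge0.
  have hq : M ^+ 2 <= (i.+1%:R) ^+ 2 by rewrite ler_pXn2r // ?nnegrE ?ler0n //; lra.
  rewrite exprVn mulrC ler_pdivrMr // mulrC ler_pdivlMr ?exprn_gt0 //.
  apply: le_trans _ hk.
  by apply: ler_wpM2l.
Qed.



Lemma avgN_ext N g1 g2 : (forall n, inN N n -> g1 n = g2 n) -> avgN N g1 = avgN N g2.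
Proof.
move=> h; rewrite /avgN; congr (_ * _).
by apply: eq_big_nat => n hn; rewrite h // inN_iota.
Qed.

Lemma P_Re z w : `|complex.Re z - complex.Re w| <= nc (z - w).
Proof. by rewrite -Re_sub nc_Re. Qed.
Lemma P_Im z w : `|complex.Im z - complex.Im w| <= nc (z - w).
Proof. by rewrite -Im_sub nc_Im. Qed.

Lemma meas_all s C psi N Phi :
  nilseq s C psi -> (forall M, 1 <= M -> C + 1 + 0 * C <= Phi M) ->
  measurable_set s Phi N (inN N).
Proof.
move=> hpsi hPhi M hM.
exists (fun n => ((fun _ : RR => 1) (complex.Re (psi n)))%:C); split.
- apply: (@nilseq_comp s C psi (@complex.Re RR) (fun _ => 1) 0 (Phi M)) => //.
  + exact: P_Re.
  + by move=> x y; rewrite subrr normr0 mul0r.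
  + by move=> x; apply/andP; split; lra.
  + exact: hPhi.
- by move=> n /=; split => //; lra.
- rewrite (@L2N_ext N _ (fun n => (1 - ib (inN N n))%:C)); last first.
    by move=> n _; rewrite indicE rmorphB.
  rewrite L2N_real (@ravg_ext N _ (fun _ => 0)); last first.
    by move=> n hn; rewrite hn /ib subrr expr0n.
  have hM0 : 0 < M by lra.
  rewrite /ravg big1 ?mulr0 ?sqrtr0 ?invr_ge0 //; lra.
Qed.

Lemma fin s C c psi (P : CC -> RR) N (f : nat -> RR) Phi :
  0 < C -> 0 < c -> (0 < N)%N -> nilseq s C psi ->
  (forall z w, `|P z - P w| <= nc (z - w)) ->
  (forall z, `|P z| <= nc z) ->
  (forall n, inN N n -> -1 <= f n <= 1) ->
  c / 2 <= `|ravg N (fun n => f n * P (psi n%:Z))| ->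
  (forall M, 1 <= M -> C + 1 + ((M + 1) ^+ 3 * (M + 2) / (c / 64)) * C <= Phi M) ->
  exists E : nat -> bool,
    (forall n, E n -> inN N n) /\ measurable_set s Phi N E /\
    (c / (16 * C))%:C <= `|avgN N (fun n => (f n)%:C * indic E n)|.
Proof.
move=> hC hc hN hpsi hP hP0 hf hcor hPhi.
have hv : forall n, inN N n -> `|P (psi n%:Z)| <= C.
  move=> n _; apply: le_trans (hP0 _) _; exact: (@nilseq_bound s C psi hpsi).
have ha : 0 < c / 64 by lra.
case: (@grid_main N f (fun n => P (psi n%:Z)) C c hN hC hc hf hv hcor).
- move=> hl; exists (inN N); split => //; split.
  + apply: (@meas_all s C psi N Phi hpsi) => M hM; apply: le_trans (hPhi M hM).
    have hM0 : 0 <= M + 1 by lra.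
    have hX : 0 <= (M + 1) ^+ 3 * (M + 2) / (c / 64).
      apply: divr_ge0; last by lra.
      by apply: mulr_ge0; [apply: exprn_ge0 | lra].
    have : 0 <= (M + 1) ^+ 3 * (M + 2) / (c / 64) * C by apply: mulr_ge0 => //; lra.
    lra.
  + rewrite (@avgN_ext N _ (fun n => (f n)%:C)); last first.
      by move=> n hn; rewrite indicE hn /ib mulr1.
    rewrite avgN_real normC_real lecR.
    apply: le_trans hl.
    have e : c / (16 * C) = (c / (8 * C)) / 2 by field; apply: lt0r_neq0.
    have : 0 < c / (8 * C) by apply: divr_gt0; lra.
    lra.
- move=> [t [ht hgood]].
  exists (fun n => inN N n && (t < P (psi n%:Z))); split.
    by move=> n /andP [].
  split.
  + exact: (@meas_good s C (c / 64) psi P N t Phi hpsi hP ha hN hgood hPhi).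
  + rewrite (@avgN_ext N _ (fun n => (f n * ib (t < P (psi n%:Z)))%:C)); last first.
      by move=> n hn; rewrite indicE hn /= rmorphM.
    by rewrite avgN_real normC_real lecR.
Qed.



Theorem mainTheorem7 :
  GI_all ->
  forall (s : nat) (delta : RR), (1 <= s)%N -> 0 < delta ->
    exists (Phi : RR -> RR) (c' : RR),
      growth_function Phi /\ 0 < c' /\
      forall (N : nat) (f : nat -> RR), (0 < N)%N ->
        (forall n, inN N n -> -1 <= f n <= 1) ->
        delta <= gowersN s.+1 N (fun n => (f n)%:C) ->
        exists E : nat -> bool,
          (forall n, E n -> inN N n) /\
          measurable_set s Phi N E /\
          c'%:C <= `|avgN N (fun n => (f n)%:C * indic E n)|.
Proof.
move=> GI s delta hs hd.
have [C [c [hC [hc HGI]]]] := GI s delta hs hd.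
have ha : 0 < c / 64 by lra.
exists (fun M => C + 1 + M + ((M + 1) ^+ 3 * (M + 2) / (c / 64)) * C), (c / (16 * C)).
split; [split|split].
- move=> x y hx hxy.
  have h1 := @cube_mono (x + 1) (y + 1) ltac:(lra) ltac:(lra).
  have e1 : x + 2 = x + 1 + 1 by ring.
  have e2 : y + 2 = y + 1 + 1 by ring.
  rewrite e1 e2.
  have h2 : (x + 1) ^+ 3 * (x + 1 + 1) / (c / 64) <= (y + 1) ^+ 3 * (y + 1 + 1) / (c / 64).
    by rewrite ler_pM2r ?invr_gt0.
  have h3 := ler_wpM2r (ltW hC) h2.
  lra.
- move=> x hx.
  have hX : 0 <= (x + 1) ^+ 3 * (x + 2) / (c / 64) * C.
    apply: mulr_ge0; last by lra.
    apply: divr_ge0; last by lra.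
    by apply: mulr_ge0; [apply: exprn_ge0 | ]; lra.
  split; lra.
- by apply: divr_gt0 => //; lra.
move=> N f hN hf hg.
have hF : forall n, inN N n -> `|(f n)%:C| <= 1.
  move=> n hn; rewrite normC_real.
  by rewrite lecR ler_norml; apply: hf.
have [psi [hpsi hcor]] := HGI N (fun n => (f n)%:C) hN hF hg.
set z := avgN N (fun n => (f n)%:C * conjc (psi n%:Z)) in hcor.
rewrite normcE lecR in hcor.
have hz := nc_le z.
have hRe : complex.Re z = ravg N (fun n => f n * complex.Re (psi n%:Z)).
  by rewrite /z Re_avgN; apply: ravg_ext => n _; rewrite Re_fconj.
have hIm : complex.Im z = - ravg N (fun n => f n * complex.Im (psi n%:Z)).
  rewrite /z Im_avgN -ravgN; apply: ravg_ext => n _; rewrite Im_fconj.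
  done.
have hPhi : forall M, 1 <= M -> C + 1 + ((M + 1) ^+ 3 * (M + 2) / (c / 64)) * C <=
   C + 1 + M + ((M + 1) ^+ 3 * (M + 2) / (c / 64)) * C.
  by move=> M hM; lra.
case: (lerP (c / 2) `|complex.Re z|) => hcase.
- rewrite hRe in hcase.
  apply: (@fin s C c psi (@complex.Re RR) N f) => //.
  + exact: P_Re.
  + by move=> w; apply: nc_Re.
- have hcase2 : c / 2 <= `|ravg N (fun n => f n * complex.Im (psi n%:Z))|.
    by rewrite -normrN -hIm; lra.
  apply: (@fin s C c psi (@complex.Im RR) N f) => //.
  + exact: P_Im.
  + by move=> w; apply: nc_Im.
Qed.
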